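(* Let $x\in\mathbb{R}^n$ and let $\widehat{L}=L-P_{T_z}LP_{T_x^\perp}$ be its effective lifting operator. Then (i) $\widehat{L}$ has full column rank; (ii) for every $u\in\partial\|\cdot\|_{1,2}(Lx)$ (the subdifferential of $\|\cdot\|_{1,2}$ at the point $Lx$), one has $(P_{T_z}LP_{T_x^\perp})^\top u=0$ and $L^\top u=\widehat{L}^\top u$.
   Context: Let $n,N\in\mathbb{N}$, let $G_1,\dots,G_N\subseteq\{1,\dots,n\}$ be nonempty groups, possibly overlapping, with $\bigcup_iG_i=\{1,\dots,n\}$, and weights $w_i>0$. $x_G$ is the subvector of $x$ indexed by $G$ (increasing order). Let $p=\sum_i|G_i|$, partition $\{1,\dots,p\}$ into consecutive blocks $J_i=\{\sum_{j<i}|G_j|+1,\dots,\sum_{j\le i}|G_j|\}$, and define $L\in\mathbb{R}^{p\times n}$ by $(Lx)_{J_i}=w_ix_{G_i}$. For $z\in\mathbb{R}^p$, $\|z\|_{1,2}=\sum_i\|z_{J_i}\|$ (Euclidean); $u\in\partial\|\cdot\|_{1,2}(z)$ iff $u_{J_i}=z_{J_i}/\|z_{J_i}\|$ when $z_{J_i}\ne0$ and $\|u_{J_i}\|\le1$ when $z_{J_i}=0$. For $x\in\mathbb{R}^n$: $\mathcal{I}_x=\{t:x_{G_t}\ne0\}$; $\mathcal{E}_x=\{1,\dots,n\}\setminus\bigcup_{t\notin\mathcal{I}_x}G_t$, $T_x=\{x'\in\mathbb{R}^n:\mathrm{supp}(x')\subseteq\mathcal{E}_x\}$; $\mathcal{E}_z=\bigcup_{t\in\mathcal{I}_x}J_t$,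 $T_z=\{z'\in\mathbb{R}^p:\mathrm{supp}(z')\subseteq\mathcal{E}_z\}$. $P_T$ is the orthogonal (coordinate) projection onto $T$, $T^\perp$ the orthogonal complement. *)

(* Defs.v *)
From mathcomp Require Import all_boot all_order all_algebra.
Set Implicit Arguments. Unset Strict Implicit. Unset Printing Implicit Defensive.
Import Order.TTheory GRing.Theory Num.Theory.
Local Open Scope ring_scope.

Section GroupLasso.
Variables (R : rcfType) (n N : nat) (G : 'I_N -> {set 'I_n}) (w : 'I_N -> R).

(* Index set of the lifted space R^p: pairs (i, g) with g \in G i.  Its
   canonical enumeration (enum) is lexicographic in (i, g), so the
   k-th row corresponds to the k-th pair: the blocks J_i are consecutive
   and within a block the indices of G_i appear in increasing order. *)
Definition liftidx : {set 'I_N * 'I_n} := [set ij | ij.2 \in G ij.1].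

Definition p := #|liftidx|.

Definition rowpair (k : 'I_p) : 'I_N * 'I_n := enum_val k.
Definition grp (k : 'I_p) : 'I_N := (rowpair k).1.

Definition J (i : 'I_N) : {set 'I_p} := [set k | grp k == i].

(* the lifting operator L : (Lx)_{J_i} = w_i x_{G_i} *)
Definition Lop : 'M[R]_(p, n) :=
  \matrix_(k < p, j < n) (if (rowpair k).2 == j then w (grp k) else 0).

Definition coordproj m (S : {set 'I_m}) : 'M[R]_m :=
  diag_mx (\row_(i < m) (if i \in S then 1 else 0)).

Definition blocknorm (z : 'cV[R]_p) (i : 'I_N) : R :=
  Num.sqrt (\sum_(k in J i) z k 0 ^+ 2).

Definition block_nz (z : 'cV[R]_p) (i : 'I_N) : bool :=
  [exists k in J i, z k 0 != 0].

Definition subdiff12 (z u : 'cV[R]_p) : Prop :=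
  forall i : 'I_N,
    (block_nz z i -> forall k, k \in J i -> u k 0 = z k 0 / blocknorm z i) /\
    (~~ block_nz z i -> blocknorm u i <= 1).

Definition Ix (x : 'cV[R]_n) : {set 'I_N} :=
  [set t | [exists j in G t, x j 0 != 0]].

Definition Ex (x : 'cV[R]_n) : {set 'I_n} :=
  ~: (\bigcup_(t | t \notin Ix x) G t).

Definition Ez (x : 'cV[R]_n) : {set 'I_p} :=
  \bigcup_(t | t \in Ix x) J t.

(* P_{T_z} and P_{T_x^perp}; T_x^perp = {x' | supp x' \subset ~: E_x} *)
Definition PTz (x : 'cV[R]_n) : 'M[R]_p := coordproj (Ez x).
Definition PTxperp (x : 'cV[R]_n) : 'M[R]_n := coordproj (~: Ex x).

Definition Lhat (x : 'cV[R]_n) : 'M[R]_(p, n) :=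
  Lop - PTz x *m Lop *m PTxperp x.

End GroupLasso.

Arguments p {n N} G.
Arguments Lop {R n N} G w.
Arguments subdiff12 {R n N} G z u.
Arguments PTz {R n N} G x.
Arguments PTxperp {R n N} G x.
Arguments Lhat {R n N} G w x.

(* Main.v *)
Require Import Defs.
From mathcomp Require Import all_boot all_order all_algebra.
Import Order.TTheory GRing.Theory Num.Theory.
Local Open Scope ring_scope.

Lemma Mentry (R : rcfType) (n N : nat) (G : 'I_N -> {set 'I_n}) (w : 'I_N -> R)
  (x : 'cV[R]_n) k j :
  (PTz G x *m Lop G w *m PTxperp G x) k j =
  if (grp k \in Ix G x) && (j \notin Ex G x) then Lop G w k j else 0.
Proof.
rewrite /PTz /PTxperp /coordproj mul_mx_diag mul_diag_mx !mxE /Ez inE.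
have -> : (k \in \bigcup_(t | t \in Ix G x) J G t) = (grp k \in Ix G x).
  apply/bigcupP/idP => [[t Ht]|H]; first by rewrite inE => /eqP ->.
  by exists (grp k) => //; rewrite inE.
by case: (grp k \in Ix G x); case: (j \in Ex G x); rewrite /= ?mul1r ?mulr1 ?mul0r ?mulr0.
Qed.

Lemma rowpair_mem (n N : nat) (G : 'I_N -> {set 'I_n}) (k : 'I_(p G)) :
  (rowpair k).2 \in G (grp k).
Proof. by have := enum_valP k; rewrite inE. Qed.

Lemma exists_row (n N : nat) (G : 'I_N -> {set 'I_n}) t j :
  j \in G t -> exists k : 'I_(p G), rowpair k = (t, j).
Proof.
move=> Hj.
have Hm : (t, j) \in liftidx G by rewrite inE.
exists (enum_rank_in Hm (t, j)).
by rewrite /rowpair enum_rankK_in.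
Qed.

Lemma zentry (R : rcfType) (n N : nat) (G : 'I_N -> {set 'I_n}) (w : 'I_N -> R)
  (x : 'cV[R]_n) k :
  (Lop G w *m x) k 0 = w (grp k) * x (rowpair k).2 0.
Proof.
rewrite mxE (bigD1 (rowpair k).2) //= big1 ?addr0; first by rewrite mxE eqxx.
by move=> j Hj; rewrite mxE eq_sym (negbTE Hj) mul0r.
Qed.

Lemma subE (R : rcfType) m k (A B : 'M[R]_(m, k)) i j : (A - B) i j = A i j - B i j.
Proof. by rewrite !mxE. Qed.

Lemma trE (R : rcfType) m k (A : 'M[R]_(m, k)) i j : A^T i j = A j i.
Proof. by rewrite !mxE. Qed.

Lemma mulE (R : rcfType) m k l (A : 'M[R]_(m, k)) (B : 'M[R]_(k, l)) i j :
  (A *m B) i j = \sum_r A i r * B r j.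
Proof. by rewrite !mxE. Qed.

Arguments exists_row {n N G t j}.

Theorem proposition3p2 (R : rcfType) (n N : nat)
    (G : 'I_N -> {set 'I_n}) (w : 'I_N -> R)
    (HGne : forall i, G i != set0)
    (Hcover : \bigcup_(i < N) G i = [set: 'I_n])
    (Hw : forall i, 0 < w i)
    (x : 'cV[R]_n) :
  \rank (Lhat G w x) = n /\
  (forall u : 'cV[R]_(p G),
     subdiff12 G (Lop G w *m x) u ->
     (PTz G x *m Lop G w *m PTxperp G x)^T *m u = 0 /\
     (Lop G w)^T *m u = (Lhat G w x)^T *m u).
Proof.
split.
  apply/eqP; rewrite -[_ == n]/(row_full _) -sub1mx; apply/row_subP => j.
  rewrite row1.
  have [t [Hjt Ht]] : exists t, j \in G t /\ (t \in Ix G x -> j \in Ex G x).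
    case: (boolP (j \in Ex G x)) => Hj.
      have : j \in \bigcup_(i < N) G i by rewrite Hcover inE.
      by case/bigcupP => t _ Ht; exists t.
    move: Hj; rewrite /Ex inE negbK => /bigcupP [t Ht Hjt].
    by exists t; split => // /(negP Ht).
  have [k Hk] := exists_row Hjt.
  have -> : delta_mx 0 j = (w t)^-1 *: row k (Lhat G w x).
    apply/rowP => j'; rewrite mxE [in RHS]mxE mxE /Lhat subE Mentry /grp Hk /= mxE Hk /=.
    rewrite /grp Hk /=; case: (eqVneq j j') => [<-|ne].
      have -> : (t \in Ix G x) && (j \notin Ex G x) = false.
        by case: (t \in Ix G x) Ht => // ->.
      by rewrite subr0 mulVf // gt_eqF.
    by rewrite if_same subr0 mulr0.
  by apply: scalemx_sub; apply: row_sub.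
move=> u Hu.
have H0 : (PTz G x *m Lop G w *m PTxperp G x)^T *m u = 0.
  apply/colP => j; rewrite mulE [RHS]mxE big1 // => k _.
  rewrite trE Mentry.
  case: (boolP ((grp k \in Ix G x) && (j \notin Ex G x))) => [/andP [HI HE]|]; last by rewrite mul0r.
  rewrite mxE; case: eqP => Hkj; last by rewrite mul0r.
  have Hxj : x j 0 = 0.
    move: HE; rewrite /Ex inE negbK => /bigcupP [t Ht Hjt].
    apply/eqP; move: Ht; rewrite inE negb_exists => /forallP /(_ j).
    by rewrite Hjt /= negbK.
  have Hnz : block_nz (Lop G w *m x) (grp k).
    move: HI; rewrite inE => /existsP [j' /andP [Hj' Hx']].
    have [k' Hk'] := exists_row Hj'.
    apply/existsP; exists k'; rewrite inE /grp Hk' eqxx /= zentry /grp Hk' /=.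
    by rewrite mulf_neq0 // gt_eqF.
  have [H1 _] := Hu (grp k).
  rewrite (H1 Hnz k); last by rewrite inE.
  by rewrite zentry Hkj Hxj mulr0 mul0r mulr0.
split=> //.
by rewrite /Lhat linearB /= mulmxBl H0 subr0.
Qed.
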